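(* Let $X,Y$ be sets and consider multirelations $X\leftrightarrow\mathcal{P}Y$. (1) For inner deterministic $R,S$: $R\sqsubseteq_\downarrow S\iff R\subseteq S$ and $R\sqsubseteq_\uparrow S\iff S\subseteq R$; consequently $R\sqsubseteq_\updownarrow S\iff R=S$. (2) $\sqsubseteq_\updownarrow$ is antisymmetric (hence a partial order) on the set of inner univalent multirelations. (3) $\sqsubseteq_\downarrow$, $\sqsubseteq_\uparrow$ and $\sqsubseteq_\updownarrow$ are antisymmetric (hence partial orders) on the set of outer univalent multirelations. (4) On outer deterministic multirelations these three partial orders coincide: for outer deterministic $R,S$, $R\sqsubseteq_\downarrow S\iff R\sqsubseteq_\uparrow S\iff R\sqsubseteq_\updownarrow S$.
   Context: $R^{\uparrow}=\{(a,A)\mid\exists B.(a,B)\in R\wedge B\subseteq A\}$, $R^{\downarrow}=\{(a,A)\mid\exists B.(a,B)\in R\wedge A\subseteq B\}$. $R\sqsubseteq_\uparrow S\iff S\subseteq R^{\uparrow}$; $R\sqsubseteq_\downarrow S\iff R\subseteq S^{\downarrow}$; $R\sqsubseteq_\updownarrow S\iff R\sqsubseteq_\downarrow S\wedge R\sqsubseteq_\uparrow S$. A multirelation $R$ is inner univalent if every $(a,B)\in R$ has $B$ empty or a singleton, inner deterministic if every $(a,B)\in R$ has $B$ a singleton; outer univalent if for each $a\in X$ there is at most one $B$ with $(a,B)\in R$, outer deterministic if for each $a\in X$ there is exactly one such $B$. *)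

(* Defs.v *)
Set Implicit Arguments.

Definition pset (Y : Type) := Y -> Prop.
Definition subset (Y : Type) (A B : pset Y) : Prop := forall y, A y -> B y.

(* a multirelation R : X <-> P Y ; (a, B) \in R  is  R a B *)
Definition mrel (X Y : Type) := X -> pset Y -> Prop.

Definition mincl (X Y : Type) (R S : mrel X Y) : Prop :=
  forall a A, R a A -> S a A.

Definition upc (X Y : Type) (R : mrel X Y) : mrel X Y :=
  fun a A => exists B, R a B /\ subset B A.
Definition downc (X Y : Type) (R : mrel X Y) : mrel X Y :=
  fun a A => exists B, R a B /\ subset A B.

Definition ref_up (X Y : Type) (R S : mrel X Y) : Prop := mincl S (upc R).
Definition ref_down (X Y : Type) (R S : mrel X Y) : Prop := mincl R (downc S).
Definition ref_updown (X Y : Type) (R S : mrel X Y) : Prop :=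
  ref_down R S /\ ref_up R S.

Definition is_empty (Y : Type) (B : pset Y) : Prop := forall y, ~ B y.
Definition is_singleton (Y : Type) (B : pset Y) : Prop :=
  exists y, forall z, B z <-> z = y.

Definition inner_univalent (X Y : Type) (R : mrel X Y) : Prop :=
  forall a B, R a B -> is_empty B \/ is_singleton B.
Definition inner_deterministic (X Y : Type) (R : mrel X Y) : Prop :=
  forall a B, R a B -> is_singleton B.
Definition outer_univalent (X Y : Type) (R : mrel X Y) : Prop :=
  forall a B C, R a B -> R a C -> B = C.
Definition outer_deterministic (X Y : Type) (R : mrel X Y) : Prop :=
  forall a, exists B, R a B /\ forall C, R a C -> C = B.

Definition partial_order_on (X Y : Type) (P : mrel X Y -> Prop)
  (rel : mrel X Y -> mrel X Y -> Prop) : Prop :=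
  (forall R, P R -> rel R R) /\
  (forall R S T, P R -> P S -> P T -> rel R S -> rel S T -> rel R T) /\
  (forall R S, P R -> P S -> rel R S -> rel S R -> R = S).

(* Main.v *)
Require Import Defs.
From Stdlib Require Import FunctionalExtensionality PropExtensionality.
Set Implicit Arguments.

Lemma set_ext (Y : Type) (A B : pset Y) : subset A B -> subset B A -> A = B.
Proof.
  intros H1 H2. apply functional_extensionality; intro y.
  apply propositional_extensionality; split; auto.
Qed.

Lemma mrel_ext (X Y : Type) (R S : mrel X Y) : mincl R S -> mincl S R -> R = S.
Proof.
  intros H1 H2. apply functional_extensionality; intro a.
  apply functional_extensionality; intro A.
  apply propositional_extensionality; split; auto.
Qed.

Lemma sing_sub (Y : Type) (A B : pset Y) :
  is_singleton A -> is_singleton B -> subset A B -> A = B.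
Proof.
  intros [y Hy] [z Hz] H. apply set_ext; auto.
  intros w Hw. apply Hz in Hw. subst w.
  assert (Ay : A y) by (apply Hy; reflexivity).
  apply H in Ay. apply Hz in Ay. subst. apply Hy; reflexivity.
Qed.

Lemma empty_sub (Y : Type) (A B : pset Y) :
  is_empty A -> subset B A -> B = A.
Proof.
  intros HA H. apply set_ext; auto. intros y Ay. exfalso; exact (HA y Ay).
Qed.

Lemma down_refl X Y (R : mrel X Y) : ref_down R R.
Proof. intros a A H. exists A; split; [exact H| intros y; auto]. Qed.
Lemma up_refl X Y (R : mrel X Y) : ref_up R R.
Proof. intros a A H. exists A; split; [exact H| intros y; auto]. Qed.
Lemma down_trans X Y (R S T : mrel X Y) : ref_down R S -> ref_down S T -> ref_down R T.
Proof.
  intros H1 H2 a A HA. destruct (H1 a A HA) as [B [HB sAB]].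
  destruct (H2 a B HB) as [C [HC sBC]]. exists C; split; auto.
  intros y Hy; auto.
Qed.
Lemma up_trans X Y (R S T : mrel X Y) : ref_up R S -> ref_up S T -> ref_up R T.
Proof.
  intros H1 H2 a A HA. destruct (H2 a A HA) as [B [HB sBA]].
  destruct (H1 a B HB) as [C [HC sCB]]. exists C; split; auto.
  intros y Hy; auto.
Qed.

Theorem proposition5p8 (X Y : Type) :
  (* (1) *)
  (forall R S : mrel X Y, inner_deterministic R -> inner_deterministic S ->
     (ref_down R S <-> mincl R S) /\ (ref_up R S <-> mincl S R) /\
     (ref_updown R S <-> R = S)) /\
  (* (2) *)
  partial_order_on (@inner_univalent X Y) (@ref_updown X Y) /\
  (* (3) *)
  (partial_order_on (@outer_univalent X Y) (@ref_down X Y) /\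
   partial_order_on (@outer_univalent X Y) (@ref_up X Y) /\
   partial_order_on (@outer_univalent X Y) (@ref_updown X Y)) /\
  (* (4) *)
  (forall R S : mrel X Y, outer_deterministic R -> outer_deterministic S ->
     (ref_down R S <-> ref_up R S) /\ (ref_up R S <-> ref_updown R S)).
Proof.
  assert (UD : forall R S : mrel X Y, partial_order_on (fun _ => True) (@ref_updown X Y) -> True) by auto.
  clear UD.
  assert (UDrt : (forall R : mrel X Y, ref_updown R R) /\
     (forall R S T : mrel X Y, ref_updown R S -> ref_updown S T -> ref_updown R T)).
  { split. intro R; split; [apply down_refl|apply up_refl].
    intros R S T [H1 H2] [H3 H4]; split; [eapply down_trans|eapply up_trans]; eauto. }
  destruct UDrt as [UDr UDt].
  assert (P1 : forall R S : mrel X Y, inner_deterministic R -> inner_deterministic S ->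
     (ref_down R S <-> mincl R S) /\ (ref_up R S <-> mincl S R)).
  { intros R S IR IS. split; split.
    - intros H a A HA. destruct (H a A HA) as [B [HB sAB]].
      rewrite (sing_sub (IR _ _ HA) (IS _ _ HB) sAB). exact HB.
    - intros H a A HA. exists A; split; auto. intros y; auto.
    - intros H a A HA. destruct (H a A HA) as [B [HB sBA]].
      rewrite <- (sing_sub (IR _ _ HB) (IS _ _ HA) sBA). exact HB.
    - intros H a A HA. exists A; split; auto. intros y; auto. }
  split; [|split; [|split]].
  - intros R S IR IS. destruct (P1 R S IR IS) as [[a1 a2] [b1 b2]].
    split; [split; auto|split; [split; auto|]].
    split.
    + intros [H1 H2]. apply mrel_ext; auto.
    + intros ->. apply UDr.
  - split; [intros; apply UDr|split; [intros; eapply UDt; eauto|]].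
    assert (K : forall R S : mrel X Y, inner_univalent R -> inner_univalent S ->
              ref_updown R S -> ref_updown S R -> mincl R S).
    { intros R S IR IS [D1 U1] [D2 U2] a A HA.
      destruct (IR _ _ HA) as [E|Sg].
      - destruct (U2 a A HA) as [B [HB sBA]].
        rewrite <- (empty_sub E sBA). exact HB.
      - destruct (D1 a A HA) as [B [HB sAB]].
        destruct (IS _ _ HB) as [E|Sg'].
        + destruct Sg as [y Hy]. exfalso. apply (E y), sAB, Hy; reflexivity.
        + rewrite (sing_sub Sg Sg' sAB). exact HB. }
    intros R S IR IS H1 H2. apply mrel_ext; eauto.
  - assert (Kd : forall R S : mrel X Y, outer_univalent R -> outer_univalent S ->
              ref_down R S -> ref_down S R -> mincl R S).
    { intros R S IR IS D1 D2 a A HA.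
      destruct (D1 a A HA) as [B [HB sAB]].
      destruct (D2 a B HB) as [C [HC sBC]].
      rewrite (IR _ _ _ HC HA) in sBC.
      replace A with B; auto. apply set_ext; auto. }
    assert (Ku : forall R S : mrel X Y, outer_univalent R -> outer_univalent S ->
              ref_up R S -> ref_up S R -> mincl R S).
    { intros R S IR IS U1 U2 a A HA.
      destruct (U2 a A HA) as [B [HB sBA]].
      destruct (U1 a B HB) as [C [HC sCB]].
      rewrite (IR _ _ _ HC HA) in sCB.
      replace A with B; auto. apply set_ext; auto. }
    split; [|split].
    + split; [intros; apply down_refl|split; [intros; eapply down_trans; eauto|]].
      intros R S IR IS H1 H2. apply mrel_ext; eauto.
    + split; [intros; apply up_refl|split; [intros; eapply up_trans; eauto|]].
      intros R S IR IS H1 H2. apply mrel_ext; eauto.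
    + split; [intros; apply UDr|split; [intros; eapply UDt; eauto|]].
      intros R S IR IS [H1 _] [H2 _]. apply mrel_ext; eauto.
  - intros R S OR OS.
    assert (E : ref_down R S <-> ref_up R S).
    { split.
      - intros D a B HB. destruct (OR a) as [A [HA UA]].
        destruct (D a A HA) as [B' [HB' sAB]].
        destruct (OS a) as [C [HC UC]].
        rewrite (UC _ HB), <- (UC _ HB') . exists A; split; auto.
      - intros U a A HA. destruct (OS a) as [B [HB UB]].
        destruct (U a B HB) as [A' [HA' sAB]].
        destruct (OR a) as [C [HC UC]].
        rewrite (UC _ HA), <- (UC _ HA'). exists B; split; auto. }
    split; auto. split.
    + intro H; split; auto; apply E; auto.
    + intros [H _]; apply E; auto.
Qed.
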